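(* Let $R$ be a ring with identity and $a,b,c,\alpha\in R$ such that $a$ has a $(b,c)$-inverse $a^\otimes$. The following are equivalent: (i) $\alpha$ is right $(b,c)$-invertible; (ii) $\alpha$ is left annihilator $(b,c)$-invertible; (iii) $1+(\alpha-a)a^\otimes$ is right invertible; (iv) $1+a^\otimes(\alpha-a)$ is right invertible.
   Context: For $x\in R$: $xR=\{xr:r\in R\}$, $Rx=\{rx:r\in R\}$, ${}^\circ x=\{r: rx=0\}$. $a$ is $(b,c)$-invertible if there is $y\in R$ with $y\in (bRy)\cap(yRc)$, $yab=b$, $cay=c$; such $y$ is unique, denoted $a^\otimes$. $\alpha$ is right $(b,c)$-invertible if there is $y$ with $yR\subseteq bR$ and $c\alpha y=c$; left annihilator $(b,c)$-invertible if there is $y$ with ${}^\circ b\subseteq {}^\circ y$ and $c\alpha y=c$. *)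

(* Defs.v *)
From mathcomp Require Import all_boot all_algebra.
Set Implicit Arguments. Unset Strict Implicit. Unset Printing Implicit Defensive.
Import GRing.Theory.
Local Open Scope ring_scope.

Definition bc_inverse (R : pzRingType) (a b c y : R) : Prop :=
  (exists r : R, y = b * r * y) /\ (exists s : R, y = y * s * c) /\
  y * a * b = b /\ c * a * y = c.

Definition right_bc_invertible (R : pzRingType) (alpha b c : R) : Prop :=
  exists y : R, (forall r : R, exists t : R, y * r = b * t) /\ c * alpha * y = c.

Definition left_ann (R : pzRingType) (x : R) : R -> Prop := fun r => r * x = 0.

Definition lann_bc_invertible (R : pzRingType) (alpha b c : R) : Prop :=
  exists y : R, (forall r : R, left_ann b r -> left_ann y r) /\ c * alpha * y = c.

Definition right_invertible (R : pzRingType) (x : R) : Prop :=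
  exists z : R, x * z = 1.

(* Main.v *)
Require Import Defs.
From mathcomp Require Import all_boot all_algebra.
Import GRing.Theory.
Local Open Scope ring_scope.

Lemma jac (R : pzRingType) (x y : R) :
  right_invertible (1 + x*y) -> right_invertible (1 + y*x).
Proof.
case=> w hw; exists (1 - y*w*x).
have E' : (1 + y*x)*y = y*(1 + x*y) by rewrite mulrDl mulrDr mul1r mulr1 mulrA.
have E : (1 + y*x)*(y*w*x) = y*x by rewrite !mulrA E' -(mulrA y) hw mulr1.
by rewrite mulrBr mulr1 E addrK.
Qed.

Lemma i_iv (R : pzRingType) (a b c alpha y r s : R) :
  y = b*r*y -> y = y*s*c -> y*a*b = b -> c*a*y = c ->
  (right_bc_invertible alpha b c <-> right_invertible (1 + y*(alpha - a))).
Proof.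
move=> H1 H2 H3 H4.
have F1 : y*a*y = y by rewrite {2}H1 !mulrA H3 -H1.
have F2 : y*a*(y*a) = y*a by rewrite mulrA F1.
have F3 : (1 - y*a)*y = 0 by rewrite mulrBl mul1r F1 subrr.
split.
- case=> z [hz hc].
  have [t ht] := hz 1; rewrite mulr1 in ht.
  have ez : y*a*z = z by rewrite ht mulrA H3.
  have yz : y*alpha*z = y by rewrite {1}H2 -!mulrA (mulrA c) hc mulrA -H2.
  set T := 1 + y*(alpha - a).
  have TZ : T*(z*a) = y*a.
    rewrite /T mulrA mulrDl mul1r mulrDl mulrBr mulrBl yz ez mulrBl.
    by rewrite addrC subrK.
  set P := 1 - y*a.
  have yaP : y*a*P = 0 by rewrite /P mulrBr mulr1 F2 subrr.
  have TP : T*P = P + y*alpha*P.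
    by rewrite /T mulrDl mul1r mulrBr mulrBl yaP subr0.
  have TQ : T*(z*a*(y*alpha*P)) = y*alpha*P.
    by rewrite mulrA TZ !mulrA F1.
  exists (z*a + P - z*a*(y*alpha*P)).
  rewrite mulrBr mulrDr TZ TP TQ addrA addrK /P addrC subrK //.
- case=> w hw.
  set P := 1 - y*a.
  have PT : P*(1 + y*(alpha - a)) = P by rewrite mulrDr mulr1 mulrA F3 mul0r addr0.
  have Pw : P*w = P by rewrite -{1}PT -mulrA hw mulr1.
  have eT : y*a*(1 + y*(alpha - a)) = y*alpha.
    by rewrite mulrDr mulr1 mulrA F1 mulrBr addrC subrK.
  have yw : y*alpha*w = y*a by rewrite -eT -mulrA hw mulr1.
  have ez : y*a*(w*y) = w*y.
    apply/eqP; rewrite eq_sym -subr_eq0.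
    have -> : w*y - y*a*(w*y) = P*(w*y) by rewrite /P mulrBl mul1r.
    by rewrite mulrA Pw F3.
  exists (w*y); split.
    move=> r'; exists (r*(y*a*(w*y))*r').
    by rewrite -[w*y in LHS]ez {1}H1 !mulrA.
  have -> : c*alpha*(w*y) = c*a*(y*alpha*w)*y by rewrite -{1}H4 !mulrA.
  by rewrite yw -mulrA F1 H4.
Qed.

Lemma i_ii (R : pzRingType) (a b c alpha y r : R) :
  y = b*r*y -> y*a*b = b ->
  (right_bc_invertible alpha b c <-> lann_bc_invertible alpha b c).
Proof.
move=> H1 H3; split.
- case=> z [hz hc]; exists z; split=> // q; rewrite /left_ann => hq.
  have [t ht] := hz 1; rewrite mulr1 in ht.
  by rewrite ht mulrA hq mul0r.
- case=> z [hz hc]; exists z; split=> // q.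
  have hb : (1 - y*a)*b = 0 by rewrite mulrBl mul1r H3 subrr.
  have := hz _ hb; rewrite /left_ann mulrBl mul1r => /eqP; rewrite subr_eq0 => /eqP hz'.
  exists (r*(y*a*z)*q).
  by rewrite [z in LHS]hz' {1}H1 !mulrA.
Qed.

Theorem theorem4p3 (R : pzRingType) (a b c alpha ainv : R) :
  bc_inverse a b c ainv ->
  [/\ (right_bc_invertible alpha b c <-> lann_bc_invertible alpha b c),
      (lann_bc_invertible alpha b c <-> right_invertible (1 + (alpha - a) * ainv)) &
      (right_invertible (1 + (alpha - a) * ainv) <-> right_invertible (1 + ainv * (alpha - a)))].
Proof.
case=> [[r H1] [[s H2] [H3 H4]]].
have E12 := @i_ii R a b c alpha ainv r H1 H3.
have E14 := @i_iv R a b c alpha ainv r s H1 H2 H3 H4.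
have E34 : right_invertible (1 + (alpha - a) * ainv) <-> right_invertible (1 + ainv * (alpha - a)).
  by split; apply: jac.
split=> //; tauto.
Qed.
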